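(* Neither $\mathcal{L}_{ME}=\{(M,q)\mid ME[U](M)>q\}$ nor $\mathcal{L}_{GE}=\{(M,q)\mid GE[U](M)>q\}$ is a $k$-observable hyperproperty, for any positive integer $k$.
   Context: Stores map variables to values; $H$ is the high input variable and $O$ the low output variable. A trace is a sequence of stores. For a finite trace $t$, $t\circ t'$ is concatenation. A program is a set $M$ of infinite traces that is deterministic (two traces with the same initial value of $H$ are equal) and has a finite nonempty input domain $\mathbb{H}_M=\{\sigma_0(H)\}$. Input domains are unbounded in size. $M(h)$ is the output trace $(\sigma_1(O),\sigma_2(O),\dots)$ of the trace of $M$ starting with $H=h$. $\bot$ denotes termination. $M(h)=o$ means that for all $i$, $o_i=\bot$ or $M(h)_i=\bot$ or $M(h)_i=o_i$. For a distribution $\mu$ on $\mathbb{H}_M$, $\mu(O=o)=\sum_{h:M(h)=o}\mu(H=h)$, with conditional probabilities induced accordingly. $U$ is the uniform distribution on $\mathbb{H}_M$. Min-entropy QIF (log base 2): $\mathcal{V}[\mu](X)=\max_x\mu(X=x)$, $\mathcal{V}[\mu](X|Y)=\sum_y\mu(Y=y)\max_x\mu(X=x|Y=y)$, and $ME[\mu](M)=\log\frac1{\mathcal{V}[\mu](H)}-\log\frac1{\mathcal{V}[\mu](H|O)}$. Guessing-entropy QIF: $\mathcal{G}[\mu](X)=\sum_i i\,\mu(X=x_i)$ with the $x_i$ ordered by non-increasing probability; $\mathcal{G}[\mu](X|Y)=\sum_y\mu(Y=y)\sum_i i\,\mu(X=x_i|Y=y)$ with the analogous ordering for each $y$; and $GE[\mu](M)=\mathcal{G}[\mu](H)-\mathcal{G}[\mu](H|O)$.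 $\mathit{Prop}$ is the set of programs; $\mathit{Obs}$ is the set of deterministic finite sets of finite traces. For $S\in\mathit{Obs}$ and $T\in\mathit{Prop}$, $S\le T$ iff every $t\in S$ has some $t'$ with $t\circ t'\in T$. $P\subseteq\mathit{Prop}$ is $k$-observable iff for every $S\in P$ there is $T\in\mathit{Obs}$ with $T\le S$ and $|T|\le k$ such that every $S'\in\mathit{Prop}$ with $T\le S'$ is in $P$. A set $\mathcal{P}$ of pairs (program, rational) is $k$-observable iff $\{M\mid(M,q)\in\mathcal{P}\}$ is $k$-observable for every rational $q$, with the same $k$ for all $q$. *)

(* Defs.v *)
From Stdlib Require Import Reals List QArith Qreals ClassicalEpsilon ClassicalDescription.
Import ListNotations.
Local Open Scope R_scope.

(* Values: option nat, with None playing the role of ⊥ (termination). *)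
Definition Val : Type := option nat.
Definition bot : Val := None.
(* Variables are named by naturals; H is the high input, O the low output. *)
Definition Var : Type := nat.
Definition varH : Var := 0%nat.
Definition varO : Var := 1%nat.
Definition Store : Type := Var -> Val.
Definition dflt_store : Store := fun _ => bot.
Definition Trace : Type := nat -> Store.
Definition FTrace : Type := list Store.

Definition fconcat (t : FTrace) (t' : Trace) : Trace :=
  fun n => if Nat.ltb n (length t) then nth n t dflt_store else t' (n - length t)%nat.

Definition in_dom (M : Trace -> Prop) (h : Val) : Prop :=
  exists t, M t /\ t 0%nat varH = h.

Definition deterministic (M : Trace -> Prop) : Prop :=
  forall t t', M t -> M t' -> t 0%nat varH = t' 0%nat varH -> t = t'.

Definition is_program (M : Trace -> Prop) : Prop :=
  deterministic M /\
  exists l : list Val, l <> [] /\ forall h, In h l <-> in_dom M h.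

Definition is_obs (T : list FTrace) : Prop :=
  NoDup T /\
  forall s t s' t', In (s :: t) T -> In (s' :: t') T ->
    s varH = s' varH -> s :: t = s' :: t'.

Definition obs_le (S : list FTrace) (T : Trace -> Prop) : Prop :=
  forall t, In t S -> exists t' : Trace, T (fconcat t t').

Definition k_observable (P : (Trace -> Prop) -> Prop) (k : nat) : Prop :=
  forall S, P S ->
    exists T : list FTrace, is_obs T /\ obs_le T S /\ (length T <= k)%nat /\
      forall S', is_program S' -> obs_le T S' -> P S'.

Definition k_observable_pairs (PP : (Trace -> Prop) -> Q -> Prop) (k : nat) : Prop :=
  forall q : Q, k_observable (fun M => PP M q) k.

Definition dom (M : Trace -> Prop) : list Val :=
  epsilon (inhabits (@nil Val))
    (fun l => NoDup l /\ forall h, In h l <-> in_dom M h).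

Definition trace_of (M : Trace -> Prop) (h : Val) : Trace :=
  epsilon (inhabits (fun _ => dflt_store)) (fun t => M t /\ t 0%nat varH = h).

(* M(h) = (σ1(O), σ2(O), ...) *)
Definition outp (M : Trace -> Prop) (h : Val) : nat -> Val :=
  fun i => trace_of M h (S i) varO.

(* "M(h) = o" in the ⊥-tolerant sense of the paper *)
Definition out_eq (M : Trace -> Prop) (h : Val) (o : nat -> Val) : Prop :=
  forall i, o i = bot \/ outp M h i = bot \/ outp M h i = o i.

Definition ind (P : Prop) : R := if excluded_middle_informative P then 1 else 0.

Definition sumL {A : Type} (l : list A) (f : A -> R) : R :=
  fold_right (fun x acc => f x + acc) 0 l.

Definition maxL {A : Type} (l : list A) (f : A -> R) : R :=
  fold_right (fun x acc => Rmax (f x) acc) 0 l.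

(* sum of F over the set of observable outputs {M(h) | h ∈ H_M}, each
   distinct output counted once *)
Definition sum_outs (M : Trace -> Prop) (F : (nat -> Val) -> R) : R :=
  sumL (dom M) (fun h =>
    F (outp M h) / sumL (dom M) (fun h' => ind (outp M h' = outp M h))).

Definition dist := Val -> R.

Definition unif (M : Trace -> Prop) : dist :=
  fun h => if excluded_middle_informative (In h (dom M))
           then / INR (length (dom M)) else 0.

Definition prO (M : Trace -> Prop) (mu : dist) (o : nat -> Val) : R :=
  sumL (dom M) (fun h => mu h * ind (out_eq M h o)).

Definition prH_O (M : Trace -> Prop) (mu : dist) (h : Val) (o : nat -> Val) : R :=
  mu h * ind (out_eq M h o) / prO M mu o.

Definition log2 (x : R) : R := ln x / ln 2.

Definition V_H (M : Trace -> Prop) (mu : dist) : R := maxL (dom M) mu.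

Definition V_HO (M : Trace -> Prop) (mu : dist) : R :=
  sum_outs M (fun o => prO M mu o * maxL (dom M) (fun h => prH_O M mu h o)).

Definition ME (mu : dist) (M : Trace -> Prop) : R :=
  log2 (/ V_H M mu) - log2 (/ V_HO M mu).

Fixpoint insert_desc (x : R) (l : list R) : list R :=
  match l with
  | [] => [x]
  | y :: l' => if Rle_dec y x then x :: l else y :: insert_desc x l'
  end.

Fixpoint sort_desc (l : list R) : list R :=
  match l with
  | [] => []
  | x :: l' => insert_desc x (sort_desc l')
  end.

Fixpoint wsum (i : nat) (l : list R) : R :=
  match l with
  | [] => 0
  | p :: l' => INR i * p + wsum (S i) l'
  end.

Definition guess (ps : list R) : R := wsum 1 (sort_desc ps).

Definition G_H (M : Trace -> Prop) (mu : dist) : R := guess (map mu (dom M)).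

Definition G_HO (M : Trace -> Prop) (mu : dist) : R :=
  sum_outs M (fun o => prO M mu o * guess (map (fun h => prH_O M mu h o) (dom M))).

Definition GE (mu : dist) (M : Trace -> Prop) : R := G_H M mu - G_HO M mu.

Definition L_ME (M : Trace -> Prop) (q : Q) : Prop :=
  is_program M /\ ME (unif M) M > Q2R q.

Definition L_GE (M : Trace -> Prop) (q : Q) : Prop :=
  is_program M /\ GE (unif M) M > Q2R q.

(* Main.v *)
From Stdlib Require Import Reals List QArith Qreals Lia Lra Permutation ClassicalEpsilon ClassicalDescription.
Require Import Defs.
Import ListNotations.
Local Open Scope R_scope.

Lemma ind_true (P : Prop) : P -> ind P = 1.
Proof. intro H; unfold ind; destruct (excluded_middle_informative P); tauto. Qed.
Lemma ind_false (P : Prop) : ~ P -> ind P = 0.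
Proof. intro H; unfold ind; destruct (excluded_middle_informative P); tauto. Qed.
Lemma ind_bnd (P : Prop) : 0 <= ind P <= 1.
Proof. unfold ind; destruct (excluded_middle_informative P); lra. Qed.

Section Sums.
Context {A : Type}.
Lemma sumL_ext (l : list A) f g : (forall x, In x l -> f x = g x) -> sumL l f = sumL l g.
Proof. induction l; simpl; intros; auto. rewrite H, IHl; auto. Qed.
Lemma sumL_const (l : list A) c : sumL l (fun _ => c) = INR (length l) * c.
Proof. induction l; [simpl; lra|]. change (length (a::l)) with (S (length l)). rewrite S_INR.
 unfold sumL in *; cbn [fold_right]. rewrite IHl. lra. Qed.
Lemma sumL_le (l : list A) f g : (forall x, In x l -> f x <= g x) -> sumL l f <= sumL l g.
Proof. induction l; simpl; intros; [lra|]. pose proof (H a (or_introl eq_refl)).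
 assert (sumL l f <= sumL l g) by auto. unfold sumL in *; cbn [fold_right]; lra. Qed.
Lemma sumL_nonneg (l : list A) f : (forall x, In x l -> 0 <= f x) -> 0 <= sumL l f.
Proof. intros. rewrite <- (Rmult_0_r (INR (length l))), <- sumL_const. apply sumL_le; auto. Qed.
Lemma sumL_ge_elem (l : list A) f x : (forall y, In y l -> 0 <= f y) -> In x l -> f x <= sumL l f.
Proof. induction l; simpl; intros H Hx; [tauto|]. destruct Hx as [<-|Hx].
 - assert (0 <= sumL l f) by (apply sumL_nonneg; auto). lra.
 - assert (f x <= sumL l f) by auto. specialize (H a (or_introl eq_refl)). lra. Qed.
Lemma sumL_app (l1 l2 : list A) f : sumL (l1 ++ l2) f = sumL l1 f + sumL l2 f.
Proof. induction l1; simpl; [lra|]. rewrite IHl1; lra. Qed.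
Lemma sumL_zero (l : list A) f : (forall x, In x l -> f x = 0) -> sumL l f = 0.
Proof. intros. rewrite (sumL_ext l f (fun _ => 0)); auto. rewrite sumL_const; lra. Qed.
Lemma sumL_single (l : list A) f x : NoDup l -> In x l ->
  (forall y, In y l -> y <> x -> f y = 0) -> sumL l f = f x.
Proof. intros Hn Hx H. destruct (in_split _ _ Hx) as (l1 & l2 & ->).
 apply NoDup_remove_2 in Hn. rewrite sumL_app; simpl.
 rewrite !sumL_zero; [lra| |]; intros y Hy; apply H; try (apply in_or_app; simpl; tauto);
 intros ->; apply Hn; apply in_or_app; tauto. Qed.
Lemma maxL_ge (l : list A) f x : In x l -> f x <= maxL l f.
Proof. induction l; simpl; intros; [tauto|]. destruct H as [<-|H].
 apply Rmax_l. eapply Rle_trans; [apply IHl; auto| apply Rmax_r]. Qed.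
Lemma maxL_le (l : list A) f v : 0 <= v -> (forall x, In x l -> f x <= v) -> maxL l f <= v.
Proof. induction l; simpl; intros; auto. apply Rmax_lub; auto. Qed.
End Sums.

Definition sumR (l : list R) : R := fold_right Rplus 0 l.
Lemma sumR_map {A} (l : list A) f : sumR (map f l) = sumL l f.
Proof. induction l; simpl; auto. rewrite IHl; auto. Qed.

Lemma insert_perm x l : Permutation (insert_desc x l) (x :: l).
Proof. induction l; simpl; auto. destruct (Rle_dec a x); auto.
 eapply perm_trans; [apply perm_skip, IHl| apply perm_swap]. Qed.
Lemma sort_perm l : Permutation (sort_desc l) l.
Proof. induction l; simpl; auto. eapply perm_trans; [apply insert_perm| auto]. Qed.
Lemma sumR_perm l l' : Permutation l l' -> sumR l = sumR l'.
Proof. induction 1; simpl; auto; try lra. Qed.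

Lemma wsum_nonneg l i : Forall (fun x => 0 <= x) l -> 0 <= wsum i l.
Proof. revert i; induction l; simpl; intros; [lra|]. inversion H; subst.
 specialize (IHl (S i) H3). pose proof (pos_INR i). nra. Qed.
Lemma wsum_bound l i : Forall (fun x => 0 <= x) l -> wsum i l <= INR (i + length l) * sumR l.
Proof. revert i; induction l; simpl; intros; [lra|]. inversion H; subst.
 specialize (IHl (S i) H3). replace (i + S (length l))%nat with (S i + length l)%nat by lia.
 assert (INR i <= INR (S i + length l)) by (apply le_INR; lia).
 assert (0 <= sumR l). { clear -H3. induction l; simpl; [lra|]. inversion H3; subst. specialize (IHl H2). lra. }
 unfold sumR in *. nra. Qed.
Lemma guess_nonneg l : Forall (fun x => 0 <= x) l -> 0 <= guess l.
Proof. intros; unfold guess; apply wsum_nonneg. eapply Permutation_Forall; [|apply H].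
 apply Permutation_sym, sort_perm. Qed.
Lemma guess_bound l : Forall (fun x => 0 <= x) l -> guess l <= INR (1 + length l) * sumR l.
Proof. intros; unfold guess. rewrite <- (Permutation_length (sort_perm l)), <- (sumR_perm _ _ (sort_perm l)).
 apply wsum_bound. eapply Permutation_Forall; [|apply H]. apply Permutation_sym, sort_perm. Qed.

Lemma sort_repeat c n : sort_desc (repeat c n) = repeat c n.
Proof. induction n; simpl; auto. rewrite IHn. destruct n; simpl; auto.
 destruct (Rle_dec c c); [auto| lra]. Qed.
Lemma wsum_repeat c n i : wsum i (repeat c n) = c * (INR n * INR i + INR n * (INR n - 1) / 2).
Proof. revert i; induction n; intros; [simpl; lra|]. cbn [wsum repeat]. rewrite IHn, !S_INR. lra. Qed.

Lemma sort_zeros l : Forall (fun x => x = 0) l -> sort_desc l = l.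
Proof. induction 1; simpl; auto. rewrite IHForall; subst. destruct l; simpl; auto.
 inversion H0; subst. destruct (Rle_dec 0 0); [auto|lra]. Qed.
Lemma insert_zero z : Forall (fun x => x = 0) z -> insert_desc 0 z = 0 :: z.
Proof. destruct z; simpl; intros; auto. inversion H; subst. destruct (Rle_dec 0 0); [auto|lra]. Qed.
Lemma sort_one l1 l2 : Forall (fun x => x = 0) l1 -> Forall (fun x => x = 0) l2 ->
  exists z, Forall (fun x => x = 0) z /\ sort_desc (l1 ++ 1 :: l2) = 1 :: z.
Proof. intros H1 H2. induction H1; simpl.
 - exists l2; split; auto. rewrite sort_zeros by auto. destruct l2; simpl; auto.
   inversion H2; subst. destruct (Rle_dec 0 1); [auto|lra].
 - destruct IHForall as (z & Hz & ->). subst. destruct (Rle_dec 1 0); [lra|].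
   exists (0 :: z); split; auto. cbn [insert_desc]. destruct (Rle_dec 1 0); [lra|]. f_equal. apply insert_zero; auto. Qed.
Lemma wsum_zeros z i : Forall (fun x => x = 0) z -> wsum i z = 0.
Proof. revert i; induction z; simpl; intros; auto. inversion H; subst. rewrite IHz; auto. lra. Qed.
Lemma guess_one l1 l2 : Forall (fun x => x = 0) l1 -> Forall (fun x => x = 0) l2 ->
  guess (l1 ++ 1 :: l2) = 1.
Proof. intros. unfold guess. destruct (sort_one l1 l2) as (z & Hz & ->); auto.
 simpl. rewrite wsum_zeros; auto. lra. Qed.

Definition Val_dec : forall x y : Val, {x = y} + {x <> y}.
Proof. decide equality. decide equality. Defined.

Lemma dom_spec M : is_program M -> NoDup (dom M) /\ forall h, In h (dom M) <-> in_dom M h.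
Proof. intros [_ (l & _ & Hl)]. unfold dom. apply epsilon_spec.
 exists (nodup Val_dec l). split. apply NoDup_nodup. intro h. rewrite nodup_In. apply Hl. Qed.

Lemma dom_nonempty M : is_program M -> (1 <= length (dom M))%nat.
Proof. intros HP. pose proof (dom_spec M HP) as [_ Hd]. destruct HP as [_ (l & Hn & Hl)].
 destruct l as [|h l]; [congruence|]. assert (In h (dom M)) by (apply Hd, Hl; simpl; auto).
 destruct (dom M); simpl in *; [tauto|lia]. Qed.

Lemma dom_len M cand : is_program M -> (forall h, in_dom M h -> In h cand) -> (length (dom M) <= length cand)%nat.
Proof. intros HP Hc. destruct (dom_spec M HP) as [Hn Hd]. apply NoDup_incl_length; auto.
 intros h Hh; apply Hc, Hd, Hh. Qed.

Lemma trace_of_spec M h : in_dom M h -> M (trace_of M h) /\ trace_of M h 0%nat varH = h.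
Proof. intros H. unfold trace_of. apply epsilon_spec. exact H. Qed.

Section Gen.
Variable M : Trace -> Prop.
Hypothesis HP : is_program M.
Local Notation n := (length (dom M)).
Local Notation u := (unif M).

Lemma unif_in h : In h (dom M) -> u h = / INR n.
Proof. intros; unfold unif. destruct (excluded_middle_informative (In h (dom M))); tauto. Qed.
Lemma n_pos : 0 < INR n.
Proof. apply lt_0_INR. pose proof (dom_nonempty M HP). lia. Qed.
Lemma unif_nonneg h : 0 <= u h.
Proof. unfold unif. destruct (excluded_middle_informative _); [|lra].
 pose proof n_pos. left; apply Rinv_0_lt_compat; auto. Qed.

Lemma dom_ex : exists h, In h (dom M).
Proof. pose proof (dom_nonempty M HP). destruct (dom M); simpl in *; [lia|eauto]. Qed.

Lemma V_H_val : V_H M u = / INR n.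
Proof. pose proof n_pos. unfold V_H. apply Rle_antisym.
 - apply maxL_le. left; apply Rinv_0_lt_compat; auto. intros; rewrite unif_in; auto; lra.
 - destruct (dom_ex) as [h Hh].
   rewrite <- (unif_in h) by auto. apply maxL_ge. auto. Qed.

Lemma prO_ge h : In h (dom M) -> / INR n <= prO M u (outp M h).
Proof. intros Hh. unfold prO. replace (/ INR n) with (u h * ind (out_eq M h (outp M h))).
 apply (sumL_ge_elem (dom M) (fun h0 => u h0 * ind (out_eq M h0 (outp M h)))); auto.
 intros; pose proof (unif_nonneg y); pose proof (ind_bnd (out_eq M y (outp M h))); nra.
 rewrite ind_true, unif_in; auto; [lra|]. intro i; right; right; reflexivity. Qed.

Lemma prH_O_nonneg h h' : In h (dom M) -> 0 <= prH_O M u h' (outp M h).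
Proof. intros Hh. pose proof (prO_ge h Hh). pose proof n_pos. assert (0 < / INR n) by (apply Rinv_0_lt_compat; auto).
 unfold prH_O. pose proof (unif_nonneg h'); pose proof (ind_bnd (out_eq M h' (outp M h))).
 apply Rmult_le_pos; [nra|]. left; apply Rinv_0_lt_compat; lra. Qed.

Lemma F_val h : In h (dom M) ->
  prO M u (outp M h) * maxL (dom M) (fun h' => prH_O M u h' (outp M h)) = / INR n.
Proof. intros Hh. pose proof (prO_ge h Hh). pose proof n_pos. assert (0 < / INR n) by (apply Rinv_0_lt_compat; auto).
 set (P := prO M u (outp M h)) in *.
 assert (maxL (dom M) (fun h' => prH_O M u h' (outp M h)) = / INR n / P) as ->.
 { apply Rle_antisym.
   - apply maxL_le. apply Rmult_le_pos; [lra|]. left; apply Rinv_0_lt_compat; lra.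
     intros x Hx. unfold prH_O. fold P. rewrite unif_in by auto.
     pose proof (ind_bnd (out_eq M x (outp M h))). unfold Rdiv.
     apply Rmult_le_compat_r. left; apply Rinv_0_lt_compat; lra. nra.
   - replace (/ INR n / P) with (prH_O M u h (outp M h)). apply (maxL_ge (dom M) (fun h' => prH_O M u h' (outp M h)) h); auto.
     unfold prH_O; fold P. rewrite unif_in, ind_true; auto. lra. intro i; right; right; reflexivity. }
 field. lra. Qed.

Lemma c_ge h : In h (dom M) -> 1 <= sumL (dom M) (fun h' => ind (outp M h' = outp M h)).
Proof. intros Hh. rewrite <- (ind_true (outp M h = outp M h)) at 1 by auto.
 apply (sumL_ge_elem (dom M) (fun h' => ind (outp M h' = outp M h))); auto.
 intros; apply ind_bnd. Qed.

Lemma V_HO_bnd : 0 < V_HO M u <= 1.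
Proof. pose proof n_pos. assert (0 < / INR n) by (apply Rinv_0_lt_compat; auto).
 unfold V_HO, sum_outs.
 rewrite (sumL_ext (dom M) _ (fun h => / INR n / sumL (dom M) (fun h' => ind (outp M h' = outp M h)))).
 2:{ intros; rewrite F_val; auto. }
 assert (forall h, In h (dom M) -> 0 < / INR n / sumL (dom M) (fun h' => ind (outp M h' = outp M h)) <= / INR n).
 { intros h Hh; pose proof (c_ge h Hh). split. apply Rdiv_lt_0_compat; lra.
   unfold Rdiv. rewrite <- (Rmult_1_r (/ INR n)) at 2. apply Rmult_le_compat_l; [lra|].
   rewrite <- Rinv_1. apply Rinv_le_contravar; lra. }
 split.
 - destruct dom_ex as [h Hh].
   eapply Rlt_le_trans; [apply (H1 h); auto|]. apply (sumL_ge_elem (dom M) (fun h0 => / INR n / sumL (dom M) (fun h' => ind (outp M h' = outp M h0)))); auto.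
   intros; left; apply H1; auto.
 - eapply Rle_trans. apply (sumL_le _ _ (fun _ => / INR n)). intros; apply H1; auto.
   rewrite sumL_const. right; field; lra. Qed.

Lemma G_H_bnd : G_H M u <= INR (1 + n).
Proof. unfold G_H. pose proof n_pos. eapply Rle_trans. apply guess_bound.
 apply Forall_forall; intros x Hx; apply in_map_iff in Hx as (h & <- & _); apply unif_nonneg.
 rewrite length_map, sumR_map, (sumL_ext _ _ (fun _ => / INR n)) by (intros; apply unif_in; auto).
 rewrite sumL_const. right; field; lra. Qed.

Lemma G_HO_nonneg : 0 <= G_HO M u.
Proof. unfold G_HO, sum_outs. apply sumL_nonneg. intros h Hh. pose proof (c_ge h Hh).
 pose proof (prO_ge h Hh). pose proof n_pos. assert (0 < / INR n) by (apply Rinv_0_lt_compat; auto).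
 apply Rmult_le_pos; [|left; apply Rinv_0_lt_compat; lra]. apply Rmult_le_pos; [lra|].
 apply guess_nonneg. apply Forall_forall; intros x Hx; apply in_map_iff in Hx as (h' & <- & _).
 apply prH_O_nonneg; auto. Qed.

Lemma ln_le' x y : 0 < x -> x <= y -> ln x <= ln y.
Proof. intros. destruct H0. left; apply ln_increasing; auto. subst; lra. Qed.

Lemma ME_bnd : ME u M <= log2 (INR n).
Proof. unfold ME. rewrite V_H_val, Rinv_inv. pose proof V_HO_bnd. pose proof n_pos.
 assert (0 <= log2 (/ V_HO M u)). { unfold log2. apply Rmult_le_pos. rewrite <- ln_1. apply ln_le'. lra.
   rewrite <- Rinv_1. apply Rinv_le_contravar; lra. left; apply Rinv_0_lt_compat. rewrite <- ln_1; apply ln_increasing; lra. }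
 lra. Qed.

Lemma GE_bnd : GE u M <= INR (1 + n).
Proof. unfold GE. pose proof G_H_bnd. pose proof G_HO_nonneg. lra. Qed.
End Gen.

Definition tr (i : nat) : Trace := fun _ _ => Some i.
Definition SP (N : nat) (t : Trace) : Prop := exists i, (i < N)%nat /\ t = tr i.
Definition SQ (T : list FTrace) (t : Trace) : Prop :=
  exists i, t = tr i /\ (i = 0%nat \/ exists u t', In u T /\ u <> [] /\ fconcat u t' = tr i).
Definition hdH (u : FTrace) : Val := match u with [] => Some 0%nat | s :: _ => s varH end.

Lemma SP_prog N : (1 <= N)%nat -> is_program (SP N).
Proof. intros HN. split.
 - intros t t' [i [_ ->]] [j [_ ->]] H. unfold tr in H. congruence.
 - exists (map Some (seq 0 N)). split. destruct N; [lia|simpl; congruence].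
   intro h. rewrite in_map_iff. split.
   + intros (i & <- & Hi). apply in_seq in Hi. exists (tr i). split; [exists i; split; [lia|auto]|reflexivity].
   + intros (t & (i & Hi & ->) & <-). exists i; split; [reflexivity|]. apply in_seq; lia. Qed.

Lemma SP_dom N h : (1 <= N)%nat -> In h (dom (SP N)) ->
  exists i, (i < N)%nat /\ h = Some i /\ outp (SP N) h = fun _ => Some i.
Proof. intros HN Hh. destruct (dom_spec _ (SP_prog N HN)) as [_ Hd]. apply Hd in Hh.
 destruct (trace_of_spec _ _ Hh) as [(i & Hi & E) Hv]. exists i. rewrite E in Hv.
 split; auto. split; [rewrite <- Hv; reflexivity|]. unfold outp. rewrite E. reflexivity. Qed.

Lemma SP_len N : (1 <= N)%nat -> length (dom (SP N)) = N.
Proof. intros HN. pose proof (SP_prog N HN) as HP. destruct (dom_spec _ HP) as [Hn Hd].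
 assert (Hl : length (map Some (seq 0 N)) = N) by (rewrite length_map, length_seq; auto).
 apply Nat.le_antisymm.
 - assert (length (dom (SP N)) <= length (map Some (seq 0 N)))%nat; [|lia]. apply dom_len; auto.
   intros h (t & (i & Hi & ->) & <-). apply in_map_iff. exists i; split; [reflexivity|apply in_seq; lia].
 - assert (length (map Some (seq 0 N)) <= length (dom (SP N)))%nat; [|lia]. apply NoDup_incl_length.
   apply FinFun.Injective_map_NoDup. intros a b E; congruence. apply seq_NoDup.
   intros h Hh. apply in_map_iff in Hh as (i & <- & Hi). apply in_seq in Hi. apply Hd.
   exists (tr i). split; [exists i; split; [lia|auto]|reflexivity]. Qed.

Lemma SP_outp_inj N h y : (1 <= N)%nat -> In h (dom (SP N)) -> In y (dom (SP N)) -> y <> h ->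
  ~ out_eq (SP N) y (outp (SP N) h) /\ outp (SP N) y <> outp (SP N) h.
Proof. intros HN Hh Hy Hne. destruct (SP_dom N h HN Hh) as (i & _ & -> & E1).
 destruct (SP_dom N y HN Hy) as (j & _ & -> & E2). assert (i <> j) by congruence.
 split.
 - unfold out_eq. rewrite E1, E2. intros H'. specialize (H' 0%nat). unfold bot in H'. destruct H' as [?|[?|?]]; congruence.
 - rewrite E1, E2. intros H'. apply (f_equal (fun f => f 0%nat)) in H'. congruence. Qed.

Lemma map_const {A} (l : list A) (f : A -> R) c : (forall x, In x l -> f x = c) -> map f l = repeat c (length l).
Proof. induction l; simpl; intros; auto. rewrite H, IHl; auto. Qed.

Section SPcalc.
Variable N : nat.
Hypothesis HN : (1 <= N)%nat.
Local Notation M := (SP N).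
Local Notation u := (unif (SP N)).

Lemma NposR : 0 < INR N.
Proof. apply lt_0_INR; lia. Qed.

Lemma SP_c h : In h (dom M) -> sumL (dom M) (fun h' => ind (outp M h' = outp M h)) = 1.
Proof. intros Hh. destruct (dom_spec _ (SP_prog N HN)) as [Hn _].
 rewrite (sumL_single _ _ h); auto. apply ind_true; auto.
 intros y Hy Hne. apply ind_false. apply (SP_outp_inj N h y); auto. Qed.

Lemma SP_prO h : In h (dom M) -> prO M u (outp M h) = / INR N.
Proof. intros Hh. destruct (dom_spec _ (SP_prog N HN)) as [Hn _]. unfold prO.
 rewrite (sumL_single _ _ h); auto.
 rewrite ind_true by (intro i; right; right; reflexivity). rewrite (unif_in _ h Hh), SP_len by auto. lra.
 intros y Hy Hne. rewrite ind_false. lra. apply (SP_outp_inj N h y); auto. Qed.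

Lemma ME_SP : ME u M = log2 (INR N).
Proof. pose proof NposR. pose proof (SP_prog N HN) as HP. unfold ME. rewrite V_H_val, SP_len, Rinv_inv; auto.
 unfold V_HO, sum_outs.
 rewrite (sumL_ext _ _ (fun _ => / INR N)). rewrite sumL_const, SP_len by auto.
 rewrite Rinv_r by lra. rewrite Rinv_1. unfold log2. rewrite ln_1. lra.
 intros h Hh. rewrite F_val, SP_c, SP_len; auto. lra. Qed.

Lemma GE_SP : GE u M = (INR N + 1) / 2 - 1.
Proof. pose proof NposR. pose proof (SP_prog N HN) as HP. destruct (dom_spec _ HP) as [Hn _]. unfold GE, G_H, G_HO, sum_outs.
 rewrite (map_const _ _ (/ INR N)) by (intros; rewrite unif_in, SP_len; auto).
 unfold guess. rewrite sort_repeat, wsum_repeat, SP_len by auto.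
 rewrite (sumL_ext _ _ (fun _ => / INR N)). rewrite sumL_const, SP_len by auto.
 simpl INR. field. lra.
 intros h Hh. rewrite SP_c, SP_prO by auto.
 destruct (in_split _ _ Hh) as (l1 & l2 & E). pose proof Hn as Hn'. rewrite E in Hn'. apply NoDup_remove_2 in Hn'.
 assert (Hz : forall y, In y (dom M) -> y <> h -> prH_O M u y (outp M h) = 0).
 { intros y Hy Hne. unfold prH_O. rewrite ind_false. lra. apply (SP_outp_inj N h y); auto. }
 rewrite E, map_app. simpl map. replace (prH_O M u h (outp M h)) with 1.
 change (wsum 1 (sort_desc ?x)) with (guess x). rewrite guess_one. lra.
 - apply Forall_forall. intros x Hx. apply in_map_iff in Hx as (y & <- & Hy). apply Hz.
   rewrite E; apply in_or_app; auto. intros ->; apply Hn'; apply in_or_app; auto.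
 - apply Forall_forall. intros x Hx. apply in_map_iff in Hx as (y & <- & Hy). apply Hz.
   rewrite E; apply in_or_app; simpl; auto. intros ->; apply Hn'; apply in_or_app; auto.
 - unfold prH_O. rewrite SP_prO by auto. rewrite ind_true by (intro i; right; right; reflexivity).
   rewrite (unif_in _ h Hh), SP_len by auto. field; lra. Qed.
End SPcalc.

Lemma SQ_prog T : is_program (SQ T).
Proof. split.
 - intros t t' (i & -> & _) (j & -> & _) H. unfold tr in H. congruence.
 - set (cand := Some 0%nat :: map hdH T).
   assert (Hc : forall h, in_dom (SQ T) h -> In h cand).
   { intros h (t & (i & -> & Hi) & <-). unfold tr. destruct Hi as [->|(v & t' & Hv & Hne & E)]; [left; auto|].
     right. destruct v as [|s r]; [congruence|]. apply (f_equal (fun t => t 0%nat varH)) in E.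
     simpl in E. unfold tr in E. rewrite <- E. apply in_map_iff. exists (s :: r); auto. }
   exists (filter (fun h => if excluded_middle_informative (in_dom (SQ T) h) then true else false) cand).
   split.
   + assert (in_dom (SQ T) (Some 0%nat)) by (exists (tr 0); split; [exists 0%nat; auto|reflexivity]).
     assert (In (Some 0%nat) (filter (fun h => if excluded_middle_informative (in_dom (SQ T) h) then true else false) cand)).
     { apply filter_In. split. left; auto. destruct (excluded_middle_informative _); tauto. }
     intro E; rewrite E in H0; auto.
   + intro h. rewrite filter_In. destruct (excluded_middle_informative (in_dom (SQ T) h)); split.
     * intros _; auto.
     * intros _; split; auto.
     * intros [_ F]; discriminate.
     * tauto. Qed.

Lemma SQ_len T : (length (dom (SQ T)) <= S (length T))%nat.
Proof. rewrite <- (length_map hdH T). change (S (length (map hdH T))) with (length (Some 0%nat :: map hdH T)).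
 apply dom_len. apply SQ_prog.
 intros h (t & (i & -> & Hi) & <-). unfold tr. destruct Hi as [->|(v & t' & Hv & Hne & E)]; [left; auto|].
 right. destruct v as [|s r]; [congruence|]. apply (f_equal (fun t => t 0%nat varH)) in E.
 simpl in E. unfold tr in E. rewrite <- E. apply in_map_iff. exists (s :: r); auto. Qed.

Lemma core (P : (Trace -> Prop) -> Prop) (k N : nat) :
  P (SP N) -> (forall M, is_program M -> (length (dom M) <= S k)%nat -> ~ P M) -> ~ k_observable P k.
Proof. intros HS Hno Hk. destruct (Hk _ HS) as (T & _ & Hle & Hlen & Hall).
 apply (Hno (SQ T)). apply SQ_prog. pose proof (SQ_len T); lia.
 apply Hall. apply SQ_prog.
 intros t Ht. destruct (Hle t Ht) as [t' (i & _ & E)]. destruct t as [|s r].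
 - exists (tr 0). exists 0%nat. split; [reflexivity|left; reflexivity].
 - exists t'. exists i. split; auto. right. exists (s :: r), t'. split; auto. split; [congruence|auto]. Qed.

Lemma Q2R_nat m : Q2R (Z.of_nat m # 1) = INR m.
Proof. unfold Q2R; simpl. rewrite Rinv_1, Rmult_1_r, <- INR_IZR_INZ. reflexivity. Qed.

Lemma ln2_pos : 0 < ln 2.
Proof. rewrite <- ln_1. apply ln_increasing; lra. Qed.

Lemma log2_pow m : log2 (INR (2 ^ m)) = INR m.
Proof. unfold log2. rewrite pow_INR. replace (INR 2) with 2 by (simpl; lra). rewrite ln_pow by lra. pose proof ln2_pos. field. lra. Qed.

Lemma log2_le x m : 0 < x -> x <= INR (2 ^ m) -> log2 x <= INR m.
Proof. intros. rewrite <- log2_pow. unfold log2. pose proof ln2_pos. unfold Rdiv.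
 apply Rmult_le_compat_r. left; apply Rinv_0_lt_compat; auto. apply ln_le'; auto. Qed.

Theorem theorem9 : forall k : nat, (0 < k)%nat ->
  ~ k_observable_pairs L_ME k /\ ~ k_observable_pairs L_GE k.
Proof.
 intros k _. set (N := (2 ^ (k + 3))%nat).
 assert (Hk2 : (k < 2 ^ k)%nat) by (apply Nat.pow_gt_lin_r; lia).
 assert (HN : (8 * (k + 1) <= N)%nat) by (unfold N; rewrite Nat.pow_add_r; simpl; lia).
 assert (HN1 : (1 <= N)%nat) by lia.
 split; intro H; specialize (H (Z.of_nat (k + 2) # 1)); revert H; apply (core _ k N).
 - split. apply SP_prog; auto. rewrite ME_SP, Q2R_nat by auto. unfold N. rewrite log2_pow. apply lt_INR; lia.
 - intros M HP Hl [_ HM]. rewrite Q2R_nat in HM. pose proof (ME_bnd M HP).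
   assert (log2 (INR (length (dom M))) <= INR (k + 2)).
   { apply log2_le. apply lt_0_INR. pose proof (dom_nonempty M HP); lia.
     apply le_INR. pose proof (Nat.pow_gt_lin_r 2 (k+2)); lia. }
   lra.
 - split. apply SP_prog; auto. rewrite GE_SP, Q2R_nat by auto. apply le_INR in HN.
   rewrite mult_INR, plus_INR in HN. rewrite plus_INR. simpl INR in *. pose proof (pos_INR k). lra.
 - intros M HP Hl [_ HM]. rewrite Q2R_nat in HM. pose proof (GE_bnd M HP).
   assert (INR (1 + length (dom M)) <= INR (k + 2)) by (apply le_INR; lia). lra.
Qed.
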